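(* Let $P_1,\ldots,P_n$ be pairwise distinct linear orders on a finite set of alternatives $A$, and let $k_1,\ldots,k_n$ be positive integers. Let $Q=(P_1^{k_1},\ldots,P_n^{k_n})$ be the profile in which the linear order $P_i$ appears $k_i$ times (each copy held by a distinct voter). Then the profile $P=(P_1,\ldots,P_n)$ is single-crossing with respect to some tree on its voter set if and only if $Q$ is single-crossing with respect to some tree on its voter set.
   Context: A profile is a finite tuple of linear orders on $A$, one for each voter; voter $i$ prefers $a$ to $b$, written $a\succ_i b$. Given a tree $T=(V,E)$ whose vertex set $V$ is the set of voters, the profile is single-crossing with respect to $T$ if for every pair of distinct alternatives $a,b$ one of the following holds: (i) there is an edge $e\in E$ (an ''$ab$-cut'') such that, removing $e$ from $T$, the two resulting subtrees have vertex sets $V_1,V_2$ with all voters in $V_1$ preferring $a$ to $b$ and all voters in $V_2$ preferring $b$ to $a$; or (ii) all voters prefer $a$ to $b$, or all voters prefer $b$ to $a$. *)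

(* Defs.v *)
From mathcomp Require Import all_boot.
Set Implicit Arguments. Unset Strict Implicit. Unset Printing Implicit Defensive.

(* A (strict) linear order on the alternatives: [r a b] means "a is preferred to b". *)
Definition linear_order (A : finType) (r : rel A) : Prop :=
  irreflexive r /\ transitive r /\ (forall a b, a != b -> r a b || r b a).

Definition remove_edge (V : finType) (E : rel V) (u v : V) : rel V :=
  fun x y => E x y && ~~ (((x == u) && (y == v)) || ((x == v) && (y == u))).

(* A tree on vertex set V: a simple undirected graph (symmetric, irreflexive
   edge relation) that is connected and minimally connected (removing any
   edge disconnects its endpoints), i.e. connected and acyclic. *)
Definition is_tree (V : finType) (E : rel V) : Prop :=
  symmetric E /\ irreflexive E /\
  (forall x y, connect E x y) /\
  (forall u v, E u v -> ~~ connect (remove_edge E u v) u v).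

Definition single_crossing_tree (A V : finType) (prof : V -> rel A) (E : rel V) : Prop :=
  forall a b : A, a != b ->
    (exists u v, [/\ E u v,
        (forall w, connect (remove_edge E u v) u w -> prof w a b) &
        (forall w, connect (remove_edge E u v) v w -> prof w b a)])
    \/ (forall w, prof w a b) \/ (forall w, prof w b a).

Definition single_crossing_some_tree (A V : finType) (prof : V -> rel A) : Prop :=
  exists E : rel V, is_tree E /\ single_crossing_tree prof E.

(* Main.v *)
Require Import Defs.
From mathcomp Require Import all_boot.
Set Implicit Arguments. Unset Strict Implicit. Unset Printing Implicit Defensive.

Lemma connect_fwd (T : finType) (e : rel T) (P : T -> Prop) x :
  P x -> (forall y z, P y -> e y z -> P z) -> forall y, connect e x y -> P y.
Proof.
move=> Px step y /connectP [p pth ->]; elim: p x Px pth => [|z p IH] x Px //=.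
case/andP=> exz pth; apply: (IH z) => //; exact: step exz.
Qed.

Lemma connect_mono (T : finType) (e e' : rel T) x y :
  (forall a b, e a b -> e' a b) -> connect e x y -> connect e' x y.
Proof.
move=> sub; apply: (@connect_fwd _ e (connect e' x)) => [|a b ca eab].
  exact: connect0.
exact: connect_trans ca (connect1 (sub _ _ eab)).
Qed.

Lemma remove_edge_sym (T : finType) (E : rel T) u v :
  symmetric E -> symmetric (remove_edge E u v).
Proof.
move=> sE x y; rewrite /remove_edge sE; congr (_ && ~~ _).
by rewrite orbC; congr orb; apply: andbC.
Qed.

Lemma lo_antisym (A : finType) (r : rel A) a b :
  linear_order r -> r a b -> r b a -> False.
Proof. by move=> [irr [tr _]] rab rba; have := tr _ _ _ rab rba; rewrite irr. Qed.

Lemma no_in_edge (T : finType) (e : rel T) s t :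
  connect e s t -> s != t -> (forall z, e z t -> False) -> False.
Proof.
move=> c st H.
have := @connect_fwd _ e (fun w => w != t) s st.
have step : forall y z, y != t -> e y z -> z != t.
  by move=> y z _ eyz; apply/negP => /eqP zt; subst z; exact: H eyz.
by move=> /(_ step t c); rewrite eqxx.
Qed.

Definition fib (V' V : finType) (f : V' -> V) (E' : rel V') : rel V' :=
  fun p q => E' p q && (f p == f q).

Section Quot.
Variables (V' V : finType) (f : V' -> V).

Lemma proj (R' : rel V') (R : rel V) :
  (forall p q, R' p q -> f p = f q \/ R (f p) (f q)) ->
  forall s w, connect R' s w -> connect R (f s) (f w).
Proof.
move=> H s; apply: (@connect_fwd _ R' (fun w => connect R (f s) (f w)) s).
  exact: connect0.
move=> p q cp /H [<-|r] //; exact: connect_trans cp (connect1 r).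
Qed.

Lemma lift (R' : rel V') (R : rel V) :
  (forall p q, f p = f q -> connect R' p q) ->
  (forall i j, R i j -> exists p q, [/\ R' p q, f p = i & f q = j]) ->
  forall s i, connect R (f s) i -> forall w, f w = i -> connect R' s w.
Proof.
move=> Hf HR s.
apply: (@connect_fwd _ R (fun i => forall w, f w = i -> connect R' s w)).
  by move=> w /esym /Hf.
move=> i j IH /HR [p [q [rpq fp fq]]] w fw.
apply: connect_trans (IH p fp) _.
apply: connect_trans (connect1 rpq) (Hf _ _ _); by rewrite fq fw.
Qed.

Lemma fib_rem (E' : rel V') x y : f x != f y ->
  forall a b, fib f E' a b -> remove_edge E' x y a b.
Proof.
move=> nxy a b /andP [e /eqP fab]; rewrite /remove_edge e /=.
by apply/negP => /orP [] /andP [/eqP ax /eqP bx]; subst; rewrite fab eqxx in nxy.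
Qed.

Lemma rem_lift (E' : rel V') (E : rel V) x y i j p q :
  remove_edge E (f x) (f y) i j -> E' p q -> f p = i -> f q = j ->
  remove_edge E' x y p q.
Proof.
case/andP=> _ H e fp fq; rewrite /remove_edge e /=; apply: contra H.
by rewrite -fp -fq; case/orP=> /andP [/eqP -> /eqP ->]; rewrite !eqxx ?orbT.
Qed.

Lemma rem_proj (E' : rel V') (E : rel V) x y p q :
  symmetric E' ->
  (forall p q, E' p q -> f p = f x -> f q = f y -> p = x /\ q = y) ->
  remove_edge E' x y p q -> E (f p) (f q) ->
  remove_edge E (f x) (f y) (f p) (f q).
Proof.
move=> sE U /andP [e H] e2; rewrite /remove_edge e2 /=; apply: contra H.
case/orP=> /andP [/eqP a /eqP b].
  by have [-> ->] := U _ _ e a b; rewrite !eqxx.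
have e' : E' q p by rewrite sE.
by have [-> ->] := U _ _ e' b a; rewrite !eqxx orbT.
Qed.

Lemma quot_tree (E' : rel V') (E : rel V) :
  is_tree E' -> symmetric E -> irreflexive E ->
  (forall p q, E' p q -> f p != f q -> E (f p) (f q)) ->
  (forall i j, E i j -> exists p q, [/\ E' p q, f p = i & f q = j]) ->
  (forall p q, f p = f q -> connect (fib f E') p q) ->
  (forall i, exists p, f p = i) -> is_tree E.
Proof.
move=> [sE' [_ [conE' brE']]] sE irrE HE'E HEE' Hfib surj.
split=> //; split=> //; split.
  move=> i j; have [p <-] := surj i; have [q <-] := surj j.
  apply: (proj (R' := E')) (conE' p q) => a b eab.
  by case: (eqVneq (f a) (f b)) => h; [left | right; apply: HE'E].
move=> i j eij; apply/negP => c.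
have [p [q [epq fp fq]]] := HEE' _ _ eij.
have npq : f p != f q by rewrite fp fq; apply: contraTneq eij => ->; rewrite irrE.
have := brE' _ _ epq; move/negP; apply.
apply: (lift (R := remove_edge E (f p) (f q))) (erefl _) => //.
- move=> a b /Hfib; apply: connect_mono; exact: fib_rem.
- move=> i' j' r; have [p' [q' [e' fp' fq']]] := HEE' _ _ (andP r).1.
  by exists p', q'; split => //; apply: rem_lift r e' fp' fq'.
- by rewrite fp fq.
Qed.

End Quot.

Section Convex.
Variables (T : finType) (E : rel T) (u v : T).
Hypotheses (sE : symmetric E) (bridge : ~~ connect (remove_edge E u v) u v).
Local Notation H := (connect (remove_edge E u v) u).

Lemma cross x z : E x z -> H x -> ~~ H z -> x = u /\ z = v.
Proof.
move=> e hx hz; case r: (remove_edge E u v x z).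
  by rewrite (connect_trans hx (connect1 r)) in hz.
move: r; rewrite /remove_edge e /= => /negbFE /orP [] /andP [/eqP xe /eqP ze].
  by [].
by subst x; move/negP: bridge.
Qed.

Lemma noreturn w q : path E w q -> ~~ H w -> u \notin q -> H (last w q) -> False.
Proof.
elim: q w => [|z q IH] w /=; first by move=> _ /negbTE ->.
case/andP=> ewz pth nhw; rewrite inE negb_or => /andP [nuz nuq] hl.
case hz: (H z).
  have ezw : E z w by rewrite sE.
  have [zu _] := cross ezw hz nhw.
  by rewrite zu eqxx in nuz.
by apply: (IH z pth) => //; rewrite hz.
Qed.

Lemma convex x p : path E x p -> uniq (x :: p) -> H x -> H (last x p) ->
  forall z, z \in p -> H z.
Proof.
elim: p x => [|y p IH] x //= /andP [exy pth] /andP [nx up] hx hl.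
have hy : H y.
  case hy: (H y) => //.
  have [xu yv] := cross exy hx (negbT hy).
  exfalso; apply: (noreturn pth (negbT hy)) hl.
  by move: nx; rewrite inE negb_or xu => /andP [].
move=> z; rewrite inE => /orP [/eqP -> //|zp].
exact: IH pth up hy hl z zp.
Qed.

Lemma side (con : forall x y, connect E x y) w :
  H w || connect (remove_edge E u v) v w.
Proof.
apply: (@connect_fwd _ E (fun w => H w || connect (remove_edge E u v) v w) u).
- by rewrite connect0.
- move=> p q hp epq; case r: (remove_edge E u v p q).
    by case/orP: hp => hp; [rewrite (connect_trans hp (connect1 r)) | rewrite (connect_trans hp (connect1 r)) orbT].
  move: r; rewrite /remove_edge epq /= => /negbFE /orP [] /andP [_ /eqP ->].
    by rewrite connect0 orbT.
  by rewrite connect0.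
- exact: con.
Qed.

End Convex.

Section Main.
Variables (A : finType) (n : nat) (P : 'I_n -> rel A) (k : 'I_n -> nat).
Hypotheses (lo : forall i, linear_order (P i)) (inj : forall i j, P i =2 P j -> i = j)
  (hk : forall i, 0 < k i).

Local Notation V' := {i : 'I_n & 'I_(k i)}.
Local Notation prof' := (fun v : V' => P (tag v)).

Lemma distinct_pair i j : i != j -> exists a b, P i a b /\ P j b a.
Proof.
move=> ij.
have : ~~ [forall a, forall b, P i a b == P j a b].
  apply/negP => /forallP H; move/eqP: ij; apply; apply: inj => a b.
  exact/eqP/(forallP (H a)).
move/forallPn => [a /forallPn [b nab]].
have [irri [_ toti]] := lo i; have [irrj [_ totj]] := lo j.
case pab: (P i a b).
  have ab : a != b by apply: contraTneq pab => ->; rewrite irri.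
  have njab : P j a b = false by move: nab; rewrite pab; case: (P j a b).
  exists a, b; split => //; by case/orP: (totj _ _ ab) => [h|//]; rewrite njab in h.
have pjab : P j a b by move: nab; rewrite pab; case: (P j a b).
have ab : a != b by apply: contraTneq pjab => ->; rewrite irrj.
exists b, a; split => //; by case/orP: (toti _ _ ab) => [h|//]; rewrite pab in h.
Qed.

Lemma path_fib (E' : rel V') x p : path E' x p ->
  (forall z, z \in p -> tag z = tag x) -> path (fib tag E') x p.
Proof.
elim: p x => //= y p IH x /andP [e pth] H.
rewrite /fib e (H y (mem_head _ _)) eqxx /=.
apply: IH pth _ => z zp; rewrite (H z); last by rewrite inE zp orbT.
by rewrite (H y (mem_head _ _)).
Qed.

Lemma fib_conn (E' : rel V') : is_tree E' -> single_crossing_tree prof' E' ->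
  forall x y, tag x = tag y -> connect (fib tag E') x y.
Proof.
move=> [sE [irrE [conE brE]]] sc x y txy.
have /connectP [p pth ly] := conE x y; subst y.
case: (shortenP pth) txy => p' pth' up' _ txy.
have allf : forall z, z \in p' -> tag z = tag x.
  move=> z zp; case: (eqVneq (tag z) (tag x)) => // nz; exfalso.
  rewrite eq_sym in nz.
  have [a [b [hia hjb]]] := distinct_pair nz.
  have ab : a != b.
    by apply: contraTneq hia => ->; have [irr _] := lo (tag x); rewrite irr.
  case: (sc a b ab) => [[u [v [euv Hu Hv]]]|[H|H]].
  - have br := brE _ _ euv.
    have hx : connect (remove_edge E' u v) u x.
      case/orP: (side u v conE x) => // /Hv hba.
      by case: (lo_antisym (lo (tag x)) hia hba).
    have hy : connect (remove_edge E' u v) u (last x p').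
      case/orP: (side u v conE (last x p')) => // /Hv hba.
      by rewrite /= -txy in hba; case: (lo_antisym (lo (tag x)) hia hba).
    have := convex sE br pth' up' hx hy zp => /Hu hab.
    exact: (lo_antisym (lo _) hab hjb).
  - exact: (lo_antisym (lo _) (H z) hjb).
  - exact: (lo_antisym (lo _) hia (H x)).
apply/connectP; exists p' => //; exact: path_fib.
Qed.

Definition qE (E' : rel V') : rel 'I_n := fun i j =>
  (i != j) && [exists p, exists q, E' p q && (tag p == i) && (tag q == j)].

Lemma surj i : exists p : V', tag p = i.
Proof. by exists (existT _ i (Ordinal (hk i))). Qed.

Lemma QtoP : single_crossing_some_tree prof' -> single_crossing_some_tree P.
Proof.
move=> [E' [tE' sc]]; have [sE [irrE [conE brE]]] := tE'.
have HEE' : forall i j, qE E' i j -> exists p q, [/\ E' p q, tag p = i & tag q = j].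
  move=> i j /andP [_ /existsP [p /existsP [q /andP [/andP [e /eqP <-] /eqP <-]]]].
  by exists p, q.
have HE'E : forall p q, E' p q -> tag p != tag q -> qE E' (tag p) (tag q).
  move=> p q e npq; rewrite /qE npq /=; apply/existsP; exists p; apply/existsP; exists q.
  by rewrite e !eqxx.
have symq : symmetric (qE E').
  have h : forall i j, qE E' i j -> qE E' j i.
    move=> i j /[dup] /HEE' [p [q [e <- <-]]] /andP [npq _].
    by apply: HE'E; [rewrite sE | rewrite eq_sym].
  by move=> i j; apply/idP/idP; apply: h.
have irrq : irreflexive (qE E') by move=> i; rewrite /qE eqxx.
have Hfib := fib_conn tE' sc.
exists (qE E'); split.
  exact: (quot_tree tE' symq irrq HE'E HEE' Hfib surj).
move=> a b ab; case: (sc a b ab) => [[x [y [exy Hx Hy]]]|[H|H]].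
- have nxy : tag x != tag y.
    apply/negP => /eqP txy; have := Hx x (connect0 _ _); have := Hy y (connect0 _ _).
    by rewrite /= -txy => h1 h2; exact: (lo_antisym (lo _) h2 h1).
  left; exists (tag x), (tag y); split; first exact: HE'E.
  + move=> w cw; have [w' tw] := surj w; rewrite -tw; apply: (Hx w').
    apply: (lift (R := remove_edge (qE E') (tag x) (tag y))) cw _ tw.
    * move=> a' b' /Hfib; apply: connect_mono; exact: fib_rem.
    * move=> i' j' r; have [p' [q' [e' fp' fq']]] := HEE' _ _ (andP r).1.
      by exists p', q'; split => //; apply: rem_lift r e' fp' fq'.
  + move=> w cw; have [w' tw] := surj w; rewrite -tw; apply: (Hy w').
    apply: (lift (R := remove_edge (qE E') (tag x) (tag y))) cw _ tw.
    * move=> a' b' /Hfib; apply: connect_mono; exact: fib_rem.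
    * move=> i' j' r; have [p' [q' [e' fp' fq']]] := HEE' _ _ (andP r).1.
      by exists p', q'; split => //; apply: rem_lift r e' fp' fq'.
- by right; left => w; have [w' <-] := surj w; exact: H.
- by right; right => w; have [w' <-] := surj w; exact: H.
Qed.

Definition root i : V' := existT (fun i => 'I_(k i)) i (Ordinal (hk i)).

Definition lE (E : rel 'I_n) : rel V' := fun p q =>
  ((tag p != tag q) && E (tag p) (tag q) && (val (tagged p) == 0) && (val (tagged q) == 0))
  || ((tag p == tag q) && ((val (tagged p) == 0) (+) (val (tagged q) == 0))).

Lemma sig_eq (p q : V') : tag p = tag q -> val (tagged p) = val (tagged q) -> p = q.
Proof.
case: p => i a; case: q => j b /= eij; subst j => eab.
by rewrite (val_inj eab).
Qed.

Lemma root_eq (p : V') : val (tagged p) == 0 -> p = root (tag p).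
Proof. by move/eqP => z; apply: sig_eq. Qed.

Lemma lE_inter E p q : lE E p q -> tag p != tag q ->
  [/\ E (tag p) (tag q), val (tagged p) == 0 & val (tagged q) == 0].
Proof.
rewrite /lE => /orP [/andP [/andP [/andP [_ e] zp] zq] _ | /andP [/eqP e _] h] //.
by rewrite e eqxx in h.
Qed.

Lemma lE_intra E p q : lE E p q -> tag p = tag q ->
  (val (tagged p) == 0) (+) (val (tagged q) == 0).
Proof.
rewrite /lE => /orP [/andP [/andP [/andP [ne _] _] _] | /andP [_ ->]] // e.
by rewrite e eqxx in ne.
Qed.

Lemma leaf E p z : lE E z p -> val (tagged p) != 0 -> z = root (tag p).
Proof.
move=> e np; case: (eqVneq (tag z) (tag p)) => h.
  have := lE_intra e h; rewrite (negbTE np) addbF => zz.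
  by rewrite (root_eq zz) h.
by have [_ _ zp] := lE_inter e h; rewrite zp in np.
Qed.

Lemma PtoQ : single_crossing_some_tree P -> single_crossing_some_tree prof'.
Proof.
move=> [E [[sE [irrE [conE brE]]] sc]].
have slE : symmetric (lE E).
  by move=> p q; rewrite /lE eq_sym sE; congr orb; [rewrite andbAC | rewrite addbC].
have HEE' : forall i j, E i j -> exists p q, [/\ lE E p q, tag p = i & tag q = j].
  move=> i j e; exists (root i), (root j); split => //.
  have nij : i != j by apply: contraTneq e => ->; rewrite irrE.
  by rewrite /lE /= nij e.
have HE'E : forall p q, lE E p q -> tag p != tag q -> E (tag p) (tag q).
  by move=> p q e h; have [] := lE_inter e h.
have to_root : forall p, connect (fib tag (lE E)) p (root (tag p)).
  move=> p; case z: (val (tagged p) == 0); first by rewrite -(root_eq z) connect0.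
  by apply: connect1; rewrite /fib /lE /= eqxx z.
have sfib : symmetric (fib tag (lE E)).
  by move=> p q; rewrite /fib slE eq_sym.
have Hfib : forall p q, tag p = tag q -> connect (fib tag (lE E)) p q.
  move=> p q tpq; apply: connect_trans (to_root p) _.
  by rewrite tpq (sym_connect_sym sfib) to_root.
have interproj : forall x y, lE E x y -> tag x != tag y -> forall s w,
    connect (remove_edge (lE E) x y) s w ->
    connect (remove_edge E (tag x) (tag y)) (tag s) (tag w).
  move=> x y exy nxy; apply: proj => p q r.
  case: (eqVneq (tag p) (tag q)) => h; [by left | right].
  apply: (rem_proj slE) r (HE'E _ _ (andP r).1 h).
  move=> p' q' e tp tq.
  have h' : tag p' != tag q' by rewrite tp tq.
  have [_ zp zq] := lE_inter e h'; have [_ zx zy] := lE_inter exy nxy.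
  by split; apply: sig_eq => //; [rewrite (eqP zp) (eqP zx) | rewrite (eqP zq) (eqP zy)].
exists (lE E); split; last first.
  move=> a b ab; case: (sc a b ab) => [[u [v [euv Hu Hv]]]|[H|H]].
  - have nuv : u != v by apply: contraTneq euv => ->; rewrite irrE.
    have e : lE E (root u) (root v) by rewrite /lE /= nuv euv.
    left; exists (root u), (root v); split => // w cw.
      by apply: Hu; exact: (interproj _ _ e nuv _ _ cw).
    by apply: Hv; exact: (interproj _ _ e nuv _ _ cw).
  - by right; left => w; exact: H.
  - by right; right => w; exact: H.
split => //; split; first by move=> p; rewrite /lE eqxx /= addbb.
split.
  move=> x y; apply: (lift (f := tag) (R' := lE E) (R := E) _ _ (conE (tag x) (tag y)) (erefl (tag y))).
  - by move=> p q /Hfib; apply: connect_mono => a b /andP [].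
  - exact: HEE'.
move=> x y exy; apply/negP => c.
have nxy : x != y by apply: contraTneq exy => ->; rewrite /lE eqxx /= addbb.
case: (eqVneq (tag x) (tag y)) => txy; last first.
  have := interproj x y exy txy x y c.
  by apply/negP; apply: brE; have [] := lE_inter exy txy.
have hx := lE_intra exy txy.
case zy: (val (tagged y) == 0).
  have zx : val (tagged x) != 0 by rewrite zy addbT in hx.
  have c' : connect (remove_edge (lE E) x y) y x.
    by rewrite (sym_connect_sym (remove_edge_sym _ _ slE)).
  apply: (no_in_edge c'); first by rewrite eq_sym.
  move=> z /andP [ezx]; rewrite (leaf ezx zx) txy -(root_eq zy).
  by rewrite !eqxx orbT.
have zx : val (tagged x) == 0 by rewrite zy addbF in hx.
apply: (no_in_edge c nxy) => z /andP [ezy]; rewrite (leaf ezy (negbT zy)) -txy -(root_eq zx).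
by rewrite !eqxx.
Qed.

End Main.

Theorem lemma1 (A : finType) (n : nat) (P : 'I_n -> rel A) (k : 'I_n -> nat) :
  (forall i, linear_order (P i)) ->
  (forall i j, P i =2 P j -> i = j) ->
  (forall i, 0 < k i) ->
  single_crossing_some_tree P <->
  single_crossing_some_tree (fun v : {i : 'I_n & 'I_(k i)} => P (tag v)).
Proof.
move=> lo inj hk; split.
  exact: (@PtoQ A n P k hk).
exact: (@QtoP A n P k lo inj hk).
Qed.
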